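(* The group $G=\langle\sigma_1,\sigma_2,\sigma_3\rangle$ of birational transformations of $\overline{\mathcal{S}}(\theta)$ is a universal Coxeter group of rank three on the generators $\sigma_1,\sigma_2,\sigma_3$; that is, there are no relations other than those generated by $\sigma_1^2=\sigma_2^2=\sigma_3^2=1$. In particular, every element of $G$ other than the identity has a unique expression $\sigma_{i_1}\sigma_{i_2}\cdots\sigma_{i_n}$ with $n\ge1$ and $i_\nu\ne i_{\nu+1}$ for all $\nu$.
   Context: Let $\kappa\in\mathcal{K}=\{\kappa\in\mathbb{C}^5:2\kappa_0+\kappa_1+\dots+\kappa_4=1\}$ lie outside $\mathrm{Wall}$ (union of the hyperplanes $\kappa_i=m$, $i=1,\dots,4$, and $\kappa_1\pm\kappa_2\pm\kappa_3\pm\kappa_4=2m+1$, $m\in\mathbb{Z}$), and $\theta=\mathrm{rh}(\kappa)$: $a_i=2\cos\pi\kappa_i$ ($i=1,2,3$), $a_4=-2\cos\pi\kappa_4$, $\theta_i=a_ia_4+a_ja_k$ ($\{i,j,k\}=\{1,2,3\}$), $\theta_4=a_1a_2a_3a_4+\sum_{l=1}^4a_l^2-4$; $\overline{\mathcal{S}}(\theta)\subset\mathbb{P}^3$ is the (smooth) cubic surface $X_1X_2X_3+X_0(X_1^2+X_2^2+X_3^2)-X_0^2(\theta_1X_1+\theta_2X_2+\theta_3X_3)+\theta_4X_0^3=0$. For $\{i,j,k\}=\{1,2,3\}$, $\sigma_i$ is the birational involution of $\overline{\mathcal{S}}(\theta)$ given by $X'_0=X_0^2$, $X'_i=\theta_iX_0^2-X_0X_i-X_jX_k$,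 $X'_j=X_0X_j$, $X'_k=X_0X_k$ (on the affine part $x=(X_1/X_0,X_2/X_0,X_3/X_0)$: $(x_i,x_j,x_k)\mapsto(\theta_i-x_i-x_jx_k,x_j,x_k)$). *)

(* Defs.v *)
From mathcomp Require Import all_boot all_order all_algebra.
From mathcomp Require Import all_classical all_reals all_analysis.
From mathcomp Require Export complex.
Set Implicit Arguments. Unset Strict Implicit. Unset Printing Implicit Defensive.
Import Order.TTheory GRing.Theory Num.Theory.
Local Open Scope ring_scope.

Section Defs.
Variable R : realType.
Local Notation C := R[i].

(* complex cosine: cos(a + ib) = cos a cosh b - i sin a sinh b *)
Definition ccos (z : C) : C :=
  let a := complex.Re z in let b := complex.Im z in
  Complex (cos a * ((expR b + expR (- b)) / 2))
          (- (sin a * ((expR b - expR (- b)) / 2))).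

Definition twocospi (k : C) : C := 2 * ccos (Complex (pi : R) 0 * k).

Definition is_int (z : C) : Prop := exists m : int, z = m%:~R.

Definition inWall (k1 k2 k3 k4 : C) : Prop :=
  is_int k1 \/ is_int k2 \/ is_int k3 \/ is_int k4 \/
  exists (e2 e3 e4 : bool) (m : int),
    k1 + (-1) ^+ e2 * k2 + (-1) ^+ e3 * k3 + (-1) ^+ e4 * k4 = (2 * m + 1)%:~R.

(* the Riemann-Hilbert map rh : kappa |-> theta.  Indices 1,2,3 of the
   paper are the ordinals 0,1,2 of 'I_3. *)
Definition rh_a (k1 k2 k3 : C) (i : 'I_3) : C :=
  twocospi (if val i == 0%N then k1 else if val i == 1%N then k2 else k3).

Definition rh_a4 (k4 : C) : C := - twocospi k4.

Definition rh_theta (k1 k2 k3 k4 : C) (i : 'I_3) : C :=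
  rh_a k1 k2 k3 i * rh_a4 k4 + \prod_(j : 'I_3 | j != i) rh_a k1 k2 k3 j.

Definition rh_theta4 (k1 k2 k3 k4 : C) : C :=
  (\prod_(j : 'I_3) rh_a k1 k2 k3 j) * rh_a4 k4
  + (\sum_(j : 'I_3) rh_a k1 k2 k3 j ^+ 2) + rh_a4 k4 ^+ 2 - 4.

(* affine part S(theta) = {X0 <> 0} of the cubic surface, x_i = X_i / X0:
   x1 x2 x3 + x1^2 + x2^2 + x3^2 - th1 x1 - th2 x2 - th3 x3 + th4 = 0 *)
Definition onS (th : 'I_3 -> C) (th4 : C) (x : 'I_3 -> C) : Prop :=
  \prod_(j : 'I_3) x j + \sum_(j : 'I_3) x j ^+ 2
  - \sum_(j : 'I_3) th j * x j + th4 = 0.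

Definition sigma (th : 'I_3 -> C) (i : 'I_3) (x : 'I_3 -> C) : 'I_3 -> C :=
  fun j => if j == i then th i - x i - \prod_(l : 'I_3 | l != i) x l else x j.

(* the element sigma_{i1} sigma_{i2} ... sigma_{in} (composition of maps)
   attached to the word [:: i1; ...; in]; the empty word gives the identity *)
Definition word_act (th : 'I_3 -> C) (w : seq 'I_3) (x : 'I_3 -> C) : 'I_3 -> C :=
  foldr (fun i y => sigma th i y) x w.

End Defs.

Definition reduced_word (w : seq 'I_3) : bool := sorted (fun i j : 'I_3 => i != j) w.

(* Main.v *)
Require Import Defs.
From mathcomp Require Import all_boot all_order all_algebra.
From mathcomp Require Import all_classical all_reals all_analysis.
From mathcomp Require Import complex.
From mathcomp Require Import ring lra.
Import Order.TTheory GRing.Theory Num.Theory.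
Local Open Scope ring_scope.
Set Implicit Arguments. Unset Strict Implicit. Unset Printing Implicit Defensive.

Lemma uniq3 (i b k j : 'I_3) : i != b -> i != k -> b != k ->
  ((j != i) && (j != b)) = (j == k).
Proof.
move: i b k j => [[|[|[|?]]] ?] [[|[|[|?]]] ?] [[|[|[|?]]] ?] [[|[|[|?]]] ?] //.
Qed.

Lemma third (h l : 'I_3) : exists a : 'I_3, (a != h) && (a != l).
Proof. move: h l => [[|[|[|n]]] Ha] [[|[|[|m]]] Hj] //; [exists (inord 2)|exists (inord 2)|exists (inord 1)|exists (inord 2)|exists (inord 0)|exists (inord 0)|exists (inord 1)|exists (inord 0)|exists (inord 0)]; by rewrite -!val_eqE /= ?inordK. Qed.
Section S.
Variable R : realType.
Local Notation C := R[i].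
Local Notation nc := (@ComplexField.Normc.normc R).
Lemma nc_ge0 (x : C) : 0 <= nc x.
Proof. by case: x => a b; exact: sqrtr_ge0. Qed.
Lemma nc_real (t : R) : nc (Complex t 0) = `|t|.
Proof. by rewrite /ComplexField.Normc.normc /= expr0n /= addr0 sqrtr_sqr. Qed.
Lemma ncD (x y : C) : nc (x + y) <= nc x + nc y.
Proof. exact: le_normcD. Qed.
Lemma ncN (x : C) : nc (- x) = nc x.
Proof. exact: normcN. Qed.
Lemma ncM (x y : C) : nc (x * y) = nc x * nc y.
Proof. exact: ComplexField.Normc.normcM. Qed.
Lemma core (xi xb xk th : C) T : nc th <= T -> 0 <= T -> T + 3 <= nc xk ->
  nc xk < nc xb -> nc xi < nc xb -> nc xb < nc (th - xi - xb * xk).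
Proof.
move=> hth hT hk hkb hib.
have tri : nc (xb * xk) <= nc (th - xi - xb*xk) + (nc th + nc xi).
  have h1 := ncD (- (th - xi - xb*xk)) (th - xi).
  have h2 := ncD th (- xi).
  rewrite ncN in h1; rewrite ncN in h2.
  have e : - (th - xi - xb*xk) + (th - xi) = xb * xk by ring.
  rewrite e in h1.
  apply: le_trans h1 _; exact: lerD.
rewrite ncM in tri.
have := ler_wpM2l (nc_ge0 xb) hk.
have := nc_ge0 xi.
nra.
Qed.

Section G.
Variables (th : 'I_3 -> C) (th4 : C).
Let T := \sum_(i < 3) nc (th i).
Definition Preg (a : 'I_3) (x : 'I_3 -> C) :=
  forall j, j != a -> T + 3 <= nc (x j) /\ nc (x j) < nc (x a).

Lemma T_ge0 : 0 <= T.
Proof. by apply: sumr_ge0 => i _; exact: nc_ge0. Qed.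

Lemma T_ge i : nc (th i) <= T.
Proof. rewrite /T (bigD1 i) //= lerDl; apply: sumr_ge0 => j _; exact: nc_ge0. Qed.

Lemma prod_oth (f : 'I_3 -> C) i b k : i != b -> i != k -> b != k ->
  \prod_(l | l != i) f l = f b * f k.
Proof.
move=> ib ik bk; rewrite (bigD1 b) /=; last by rewrite eq_sym.
by rewrite (big_pred1 k) // => j; exact: uniq3.
Qed.

Lemma prod_all (f : 'I_3 -> C) i b k : i != b -> i != k -> b != k ->
  \prod_l f l = f i * (f b * f k).
Proof. by move=> ib ik bk; rewrite (bigD1 i) //= (prod_oth f ib ik bk). Qed.

Lemma sum_all (f : 'I_3 -> C) i b k : i != b -> i != k -> b != k ->
  \sum_l f l = f i + (f b + f k).
Proof.
move=> ib ik bk; rewrite (bigD1 i) //= (bigD1 b) /=; last by rewrite eq_sym.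
by rewrite (big_pred1 k) // => j; exact: uniq3.
Qed.

Lemma sigma_i x i : sigma th i x i = th i - x i - \prod_(l | l != i) x l.
Proof. by rewrite /sigma eqxx. Qed.

Lemma sigma_j x i j : j != i -> sigma th i x j = x j.
Proof. by move=> ji; rewrite /sigma (negbTE ji). Qed.

Lemma invol i x : sigma th i (sigma th i x) = x.
Proof.
apply: funext => j; rewrite {1}/sigma; case: eqP => [->|ne]; last first.
  by rewrite sigma_j //; apply/eqP.
rewrite sigma_i.
have -> : \prod_(l | l != i) sigma th i x l = \prod_(l | l != i) x l.
  by apply: eq_bigr => l li; rewrite sigma_j.
ring.
Qed.

Lemma step b i x : Preg b x -> i != b -> Preg i (sigma th i x).
Proof.
move=> Pb ib; have [k /andP [ki kb]] := third i b.
have Pk := Pb k kb; have Pi := Pb i ib.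
have c : nc (x b) < nc (sigma th i x i).
  rewrite sigma_i (@prod_oth x i b k) //; last 2 first.
  - by rewrite eq_sym.
  - by rewrite eq_sym.
  exact: (core (T_ge i) T_ge0 Pk.1 Pk.2 Pi.2).
move=> j ji; rewrite sigma_j //; case: (eqVneq j b) => [->|jb].
  by split=> //; have := Pk.1; have := Pk.2; lra.
have /eqP -> : j == k by rewrite -(@uniq3 i b k j) ?ji ?jb // eq_sym.
by split; [exact: Pk.1 | exact: lt_trans Pk.2 c].
Qed.

Lemma wa_cons i w x : word_act th (i :: w) x = sigma th i (word_act th w x).
Proof. by []. Qed.

Lemma pp a x i w : Preg a x -> path (fun i j : 'I_3 => i != j) i w ->
  last i w != a -> Preg i (word_act th (i :: w) x).
Proof.
elim: w i => [|j w IH] i Pa.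
  by move=> _ ia; exact: step Pa ia.
move=> /andP[ij pw] l; have Pj := IH j Pa pw l.
exact: step Pj ij.
Qed.

Lemma disj p q y : Preg p y -> Preg q y -> p != q -> False.
Proof.
move=> Pp Pq pq; have qp : q != p by rewrite eq_sym.
have := (Pp q qp).2; have := (Pq p pq).2; lra.
Qed.

Lemma start a : exists x, onS th th4 x /\ Preg a x.
Proof.
have [b /andP [ba _]] := third a a.
have [k /andP [ka kb]] := third a b.
have ab : a != b by rewrite eq_sym.
have ak : a != k by rewrite eq_sym.
have bk : b != k by rewrite eq_sym.
pose t := T + 3.
pose tc : C := Complex t 0.
pose s := th a - tc * tc.
pose c := 2 * (tc * tc) - (th b + th k) * tc + th4.
have h2 : (2 : C) != 0 by rewrite pnatr_eq0.
have h4 : (4 : C) != 0 by rewrite pnatr_eq0.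
have root : forall e : C, e ^+ 2 = s ^+ 2 - 4 * c ->
    ((s + e) / 2) ^+ 2 - s * ((s + e) / 2) + c = 0.
  move=> e he.
  have -> : ((s + e) / 2) ^+ 2 - s * ((s + e) / 2) + c
            = (e ^+ 2 - (s ^+ 2 - 4 * c)) / 4 by field.
  by rewrite he subrr mul0r.
have [r [hr hrs]] : exists r, r ^+ 2 - s * r + c = 0 /\ nc s <= 2 * nc r.
  pose d := sqrtc (s ^+ 2 - 4 * c).
  have hd : d ^+ 2 = s ^+ 2 - 4 * c by exact: sqr_sqrtc.
  case: (lerP (nc s) (2 * nc ((s + d) / 2))) => H.
    by exists ((s + d) / 2); split => //; exact: root.
  exists ((s + - d) / 2); split; first by apply: root; rewrite sqrrN.
  have e : s = (s + d) / 2 + (s + - d) / 2 by field.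
  have := ncD ((s + d) / 2) ((s + - d) / 2); rewrite -e => H2.
  lra.
exists (fun l => if l == a then r else tc); split.
  rewrite /onS (prod_all _ ab ak bk) (sum_all _ ab ak bk) (sum_all _ ab ak bk).
  rewrite eqxx (negbTE ba) (negbTE ka).
  apply: etrans hr; rewrite /s /c; ring.
have tge : 0 <= t by rewrite /t; have := T_ge0; lra.
have ntc : nc tc = t by rewrite nc_real ger0_norm.
have hs : t * t <= nc (th a) + nc s.
  have := ncD (th a) (- s).
  have -> : th a + - s = tc * tc by rewrite /s; ring.
  by rewrite ncN ncM ntc.
have := T_ge a; have := T_ge0.
move=> T0 Ta j ja; rewrite (negbTE ja) eqxx ntc; split; first by rewrite /t.
rewrite /t in hs tge *; nra.
Qed.

Lemma nonid i w : path (fun i j : 'I_3 => i != j) i w ->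
  exists x, onS th th4 x /\ word_act th (i :: w) x != x.
Proof.
move=> pw; have [a /andP [ai al]] := third i (last i w).
have [x [Sx Pa]] := start a; exists x; split => //.
have la : last i w != a by rewrite eq_sym.
apply/eqP => E; have := pp Pa pw la; rewrite E => Pi.
exact: (disj Pa Pi ai).
Qed.

Lemma dheads i1 w1 i2 w2 : path (fun i j : 'I_3 => i != j) i1 w1 ->
  path (fun i j : 'I_3 => i != j) i2 w2 -> i1 != i2 ->
  exists x, onS th th4 x /\ word_act th (i1 :: w1) x != word_act th (i2 :: w2) x.
Proof.
move=> p1 p2 ne; have [a /andP [a1 a2]] := third (last i1 w1) (last i2 w2).
have [x [Sx Pa]] := start a; exists x; split => //.
have b1 : last i1 w1 != a by rewrite eq_sym.
have b2 : last i2 w2 != a by rewrite eq_sym.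
apply/eqP => E; have P1 := pp Pa p1 b1; have P2 := pp Pa p2 b2.
rewrite E in P1; exact: (disj P1 P2 ne).
Qed.
End G.
End S.

Theorem theorem7p7 (R : realType) (k0 k1 k2 k3 k4 : R[i])
    (hK : 2 * k0 + k1 + k2 + k3 + k4 = 1)
    (hW : ~ inWall k1 k2 k3 k4) :
  let th := rh_theta k1 k2 k3 k4 in
  let th4 := rh_theta4 k1 k2 k3 k4 in
  (forall (i : 'I_3) (x : 'I_3 -> R[i]), onS th th4 x ->
      sigma th i (sigma th i x) = x) /\
  (forall w1 w2 : seq 'I_3, reduced_word w1 -> reduced_word w2 ->
      (forall x : 'I_3 -> R[i], onS th th4 x -> word_act th w1 x = word_act th w2 x) ->
      w1 = w2).
Proof.
move=> th th4; split; first by move=> i x _; exact: invol.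
elim=> [|i1 w1 IH] [|i2 w2] r1 r2 E //.
- have [x [Sx ne]] := nonid th th4 r2.
  by move: ne; rewrite -(E x Sx) eqxx.
- have [x [Sx ne]] := nonid th th4 r1.
  by move: ne; rewrite (E x Sx) eqxx.
- case: (eqVneq i1 i2) => [eq|ne].
    subst i2; congr (_ :: _); apply: IH.
    + exact: path_sorted r1.
    + exact: path_sorted r2.
    move=> x Sx; have := E x Sx; rewrite !wa_cons => /(congr1 (sigma th i1)).
    by rewrite !invol.
  have [x [Sx ne']] := dheads th th4 r1 r2 ne.
  by move: ne'; rewrite (E x Sx) eqxx.
Qed.
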